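(* Let $G=(V,E)$ be a connected unit disk graph. Then the output of Heuristic CDOM on $G$ is a connected dominating set of $G$.
   Context: A graph $G$ is a unit disk graph if its vertices can be put in one-to-one correspondence with closed disks of radius $1$ in the plane so that two vertices are adjacent if and only if the corresponding disks intersect (tangent disks are considered to intersect). A dominating set is a set $V'\subseteq V$ such that every vertex of $V\setminus V'$ has a neighbor in $V'$; it is connected if the subgraph induced on $V'$ is connected. $G(U)$ denotes the subgraph induced on $U$. Heuristic CDOM: (1) pick an arbitrary vertex $v\in V$; (2) construct a breadth-first spanning tree $T$ of $G$ rooted at $v$, let $k$ be its depth and $S_i$ the set of vertices at level $i$ (distance $i$ from $v$ in $T$), $0\le i\le k$; (3) set $IS_0=\{v\}$, $NS_0=\emptyset$; (4) for $i=1,\dots,k$: let $DS_i$ be the set of vertices of $S_i$ adjacent to some vertex of $IS_{i-1}$; let $IS_i$ be any maximal independent set of $G(S_i\setminus DS_i)$; let $NS_i$ be the set of parents in $T$ of the vertices of $IS_i$; (5) output $\left(\bigcup_{i=0}^k IS_i\right)\cup\left(\bigcup_{i=0}^k NS_i\right)$. *)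

(* Defs.v *)
From Stdlib Require Import Reals.
From mathcomp Require Import all_boot.
Set Implicit Arguments. Unset Strict Implicit. Unset Printing Implicit Defensive.

Section Defs.
Variable T : finType.

(* Unit disk graph: vertices correspond one-to-one to closed radius-1 disks
   (centres pos x), adjacent iff the disks intersect, i.e. centre distance <= 2
   (squared distance <= 4).  Graphs are simple: no loops. *)
Definition unit_disk_graph (e : rel T) : Prop :=
  exists pos : T -> (R * R),
    injective pos /\
    forall x y : T,
      e x y <-> (x <> y /\
        Rle (Rplus (pow (Rminus (fst (pos x)) (fst (pos y))) 2)
                   (pow (Rminus (snd (pos x)) (snd (pos y))) 2))
            (IZR 4)).

Definition connected_graph (e : rel T) : Prop := forall x y : T, connect e x y.

Fixpoint ball (e : rel T) (v : T) (n : nat) : {set T} :=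
  match n with
  | 0 => [set v]
  | n'.+1 => ball e v n' :|: [set y | [exists x in ball e v n', e x y]]
  end.

Definition level (e : rel T) (v : T) (i : nat) : {set T} :=
  match i with
  | 0 => [set v]
  | i'.+1 => ball e v i'.+1 :\: ball e v i'
  end.

Definition bfs_tree (e : rel T) (v : T) (par : T -> T) : Prop :=
  par v = v /\
  (forall u, u != v -> e u (par u)) /\
  (forall i u, u \in level e v i.+1 -> par u \in level e v i).

Definition independent (e : rel T) (I : {set T}) : bool :=
  [forall x in I, forall y in I, ~~ e x y].

Definition maximal_independent_in (e : rel T) (W I : {set T}) : bool :=
  maxset (fun J : {set T} => (J \subset W) && independent e J) I.

Definition dominating (e : rel T) (D : {set T}) : Prop :=
  forall x, x \notin D -> exists2 y, y \in D & e x y.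

Definition induced_connected (e : rel T) (D : {set T}) : Prop :=
  forall x y, x \in D -> y \in D ->
    connect [rel a b | [&& e a b, a \in D & b \in D]] x y.

Definition connected_dominating (e : rel T) (D : {set T}) : Prop :=
  dominating e D /\ induced_connected e D.

Definition DS (e : rel T) (v : T) (IS : nat -> {set T}) (i : nat) : {set T} :=
  [set u in level e v i | [exists w in IS i.-1, e u w]].

Definition NS (par : T -> T) (IS : nat -> {set T}) (i : nat) : {set T} :=
  if i is 0 then set0 else par @: IS i.

(* Valid run of Heuristic CDOM with root v, BFS tree par of depth k and the
   choices IS_1..IS_k of maximal independent sets. *)
Definition cdom_run (e : rel T) (v : T) (par : T -> T) (k : nat)
    (IS : nat -> {set T}) : Prop :=
  IS 0 = [set v] /\
  forall i, 1 <= i <= k ->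
    maximal_independent_in e (level e v i :\: DS e v IS i) (IS i).

Definition cdom_output (par : T -> T) (k : nat) (IS : nat -> {set T}) : {set T} :=
  \bigcup_(i < k.+1) (IS i :|: NS par IS i).

End Defs.

(* Main.v *)
Require Import Defs.
From Stdlib Require Import Reals.
From mathcomp Require Import all_boot.

Lemma sq_swap (a b : R) : pow (Rminus a b) 2 = pow (Rminus b a) 2.
Proof. ring. Qed.

Section Aux.
Variable T : finType.
Variable e : rel T.
Hypothesis esym : forall x y, e x y -> e y x.
Hypothesis eirr : forall x, ~~ e x x.

Lemma v_ball v n : v \in ball e v n.
Proof. elim: n => [|n IH] /=; first by rewrite in_set1. by rewrite in_setU IH. Qed.

Lemma ball_level v n x : x \in ball e v n -> exists2 i, i <= n & x \in level e v i.
Proof.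
elim: n => [|n IH] /=; first by move=> H; exists 0.
case: (boolP (x \in ball e v n)) => [/IH [i Hi Hx] _|Hn Hx].
  by exists i => //; apply: leqW.
exists n.+1 => //=. by rewrite in_setD Hn Hx.
Qed.

Lemma level_neq v i u : u \in level e v i.+1 -> u != v.
Proof.
rewrite /= in_setD => /andP [Hn _]; apply/eqP => Huv.
by move: Hn; rewrite Huv v_ball.
Qed.

Lemma max_ind_dom W I x : maximal_independent_in e W I -> x \in W ->
  x \in I \/ exists2 w, w \in I & e x w.
Proof.
move=> /maxsetP [/andP [IW indI] mx] xW.
case: (boolP [exists w in I, e x w]) => [/exists_inP [w wI ex]|H].
  by right; exists w.
left.
have <- : x |: I = I.
  apply: mx; last by apply: subsetUr.
  rewrite subUset sub1set xW IW /=.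
  apply/forallP => a; apply/implyP => aI; apply/forallP => b; apply/implyP => bI.
  rewrite !in_setU1 in aI bI.
  case/orP: aI => [/eqP->|aI]; case/orP: bI => [/eqP->|bI].
  - exact: eirr.
  - apply/negP => exb; move/negP: H; apply; apply/exists_inP; by exists b.
  - apply/negP => /esym exa; move/negP: H; apply; apply/exists_inP; by exists a.
  - by move/forallP: indI => /(_ a); rewrite aI /= => /forallP /(_ b); rewrite bI.
by rewrite in_setU1 eqxx.
Qed.

End Aux.

Theorem lemma4p4 (T : finType) (e : rel T)
    (udg : unit_disk_graph e) (conn : connected_graph e)
    (v : T) (par : T -> T) (hbfs : bfs_tree e v par)
    (k : nat) (hk : ball e v k = [set: T]) (hkne : level e v k != set0)
    (IS : nat -> {set T}) (hrun : cdom_run e v par k IS) :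
  connected_dominating e (cdom_output par k IS).
Proof.
have esym : forall x y, e x y -> e y x.
  case: udg => pos [_ H] x y; rewrite !H => [[nxy Hle]]; split.
    by move=> E; apply: nxy.
  by rewrite (sq_swap (fst (pos y))) (sq_swap (snd (pos y))).
have eirr : forall x, ~~ e x x.
  case: udg => pos [_ H] x; apply/negP; rewrite H; by case.
case: hbfs => [parv [pare parl]].
case: hrun => [IS0 hmax].
set D := cdom_output par k IS.
have ISD : forall i x, i <= k -> x \in IS i -> x \in D.
  move=> i x ik xI; rewrite /D /cdom_output; apply/(@bigcupP T _ x xpredT); exists (Ordinal (ik : i < k.+1)) => //.
  by rewrite in_setU xI.
have NSD : forall i x, 1 <= i <= k -> x \in IS i -> par x \in D.
  case=> [|i] x; first by case/andP. move=> /andP [_ ik] xI; rewrite /D /cdom_output; apply/(@bigcupP T _ (par x) xpredT); exists (Ordinal (ik : i.+1 < k.+1)) => //.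
  rewrite in_setU /=; apply/orP; right; by apply: imset_f.
have ISsub : forall i x, 1 <= i <= k -> x \in IS i -> x \in level e v i :\: DS e v IS i.
  move=> i x Hi xI; move: (hmax i Hi) => /maxsetP [/andP [sub _] _].
  exact: (subsetP sub).
split.
- move=> x xD.
  have : x \in ball e v k by rewrite hk inE.
  case/(ball_level) => [[|i] ik xl].
    by move: xD; rewrite /= in_set1 in xl; rewrite (eqP xl) (ISD 0) // IS0 in_set1.
  case: (boolP (x \in DS e v IS i.+1)) => [|nDS].
    rewrite inE => /andP [_ /exists_inP [w wI exw]]; exists w => //.
    by apply: (ISD i) => //; apply: ltnW.
  have Hi : 1 <= i.+1 <= k by rewrite ik.
  case: (@max_ind_dom T e esym eirr _ _ _ (hmax _ Hi) (_ : x \in level e v i.+1 :\: DS e v IS i.+1)).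
  + by rewrite in_setD nDS.
  + by move=> xI; move: xD; rewrite (ISD _ _ ik xI).
  + by case=> w wI exw; exists w => //; apply: (ISD _ _ ik wI).
- pose eD := [rel a b | [&& e a b, a \in D & b \in D]].
  have symD : connect_sym eD.
    apply: sym_connect_sym => a b /=; apply/idP/idP => /and3P [h1 h2 h3];
      by rewrite esym // h2 h3.
  have key : forall n i, i <= n -> i <= k -> forall u, u \in IS i -> connect eD u v.
    elim=> [|n IH] i ni ik u uI.
      by move: ni uI; rewrite leqn0 => /eqP ->; rewrite IS0 in_set1 => /eqP ->.
    case: i ni ik uI => [|j] ni ik uI.
      by move: uI; rewrite IS0 in_set1 => /eqP ->.
    have Hj : 1 <= j.+1 <= k by rewrite ik.
    have := ISsub _ _ Hj uI; rewrite in_setD => /andP [_ ul].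
    have uD := ISD _ _ ik uI.
    have pD := NSD _ _ Hj uI.
    have cup : connect eD u (par u).
      apply: connect1; rewrite /= uD pD !andbT; apply: pare; exact: level_neq ul.
    apply: connect_trans cup _.
    have pl := parl _ _ ul.
    case: j ni ik uI Hj ul pl => [|j] ni ik uI Hj ul pl.
      by move: pl; rewrite /= in_set1 => /eqP ->.
    have ni' : j.+1 <= n by [].
    have ik' : j < k by apply: ltnW.
    case: (boolP (par u \in DS e v IS j.+1)) => [|nDS].
      rewrite inE => /andP [_ /exists_inP [w wI epw]].
      have wD := ISD _ _ (ltnW ik') wI.
      apply: connect_trans (IH j _ (ltnW ik') w wI).
        by apply: connect1; rewrite /= epw pD wD.
      by apply: ltnW.
    have Hj' : 1 <= j.+1 <= k by rewrite ik'.
    case: (@max_ind_dom T e esym eirr _ _ _ (hmax _ Hj') (_ : par u \in level e v j.+1 :\: DS e v IS j.+1)).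
    + by rewrite in_setD nDS.
    + by move=> pI; apply: (IH j.+1).
    + case=> w wI epw.
      have wD := ISD _ _ ik' wI.
      apply: connect_trans (IH j.+1 _ ik' w wI) => //.
      by apply: connect1; rewrite /= epw pD wD.
  have toV : forall x, x \in D -> connect eD x v.
    move=> x; rewrite /D /cdom_output => /(@bigcupP T _ x xpredT) [[i ik] _]; rewrite in_setU => /orP [xI|].
      by apply: (key i i).
    case: i ik => [|i] ik //=; first by rewrite in_set0.
    case/imsetP => u uI ->.
    have ik2 : i.+1 <= k by [].
    have Hi : 1 <= i.+1 <= k by rewrite ik2.
    have := ISsub _ _ Hi uI; rewrite in_setD => /andP [_ ul].
    apply: connect_trans (key i.+1 i.+1 (leqnn _) ik2 u uI).
    apply: connect1; rewrite /= (ISD _ _ ik2 uI) (NSD _ _ Hi uI) !andbT.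
    apply: esym; apply: pare; exact: level_neq ul.
  move=> x y xD yD.
  apply: connect_trans (toV x xD) _.
  by rewrite symD; apply: toV.
Qed.
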